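(* There exists an absolute constant $\varepsilon_0>0$ such that for the gossip USD, every $n$ and every $t\ge1$: if $\beta_{t-1}\ge\frac12-\varepsilon_0$, $\psi_{t-1}\le\varepsilon_0$ and $\gamma_{t-1}\le\varepsilon_0$, then $$\mathbb E_{t-1}[\widetilde\gamma_t]\ge\widetilde\gamma_{t-1}+\frac{1}{12n}.$$
   Context: Vertex set $V$, $|V|=n$; opinions in $\Sigma=[k]\cup\{\bot\}$ ($\bot$ = undecided). USD update rule: $\mathsf{update}(\sigma_1,\sigma_2)=\bot$ if $\sigma_1,\sigma_2\in[k]$ and $\sigma_1\ne\sigma_2$; $=\sigma_2$ if $\sigma_1=\bot$; $=\sigma_1$ otherwise. Gossip USD: given $\mathrm{opn}_t\in\Sigma^V$, every $u\in V$ independently picks $v$ uniformly from $V$ and sets $\mathrm{opn}_{t+1}(u)=\mathsf{update}(\mathrm{opn}_t(u),\mathrm{opn}_t(v))$. Notation: $\alpha_t(i)=|\{u:\mathrm{opn}_t(u)=i\}|/n$, $\beta_t=\sum_{i\in[k]}\alpha_t(i)$, $\gamma_t=\sum_{i\in[k]}\alpha_t(i)^2$, $\psi_t=\beta_t(2\beta_t-1)-\gamma_t$, and $\widetilde\gamma_t=\gamma_t/\beta_t^2$ if $\beta_t>0$, $\widetilde\gamma_t=0$ if $\beta_t=0$. $\mathbb E_{t-1}$ is conditional expectation given the natural filtration $\mathcal F_{t-1}$. *)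

(* Defs.v *)
From HB Require Import structures.
From mathcomp Require Import all_boot all_order all_algebra.
Set Implicit Arguments. Unset Strict Implicit. Unset Printing Implicit Defensive.
Import Order.TTheory GRing.Theory Num.Theory.
Local Open Scope ring_scope.

(* Opinions: Sigma = [k] ∪ {⊥}, encoded as option 'I_k with None = ⊥.
   Vertex set V = 'I_n. A configuration is opn : {ffun 'I_n -> option 'I_k}. *)

Definition usd_update (k : nat) (s1 s2 : option 'I_k) : option 'I_k :=
  match s1, s2 with
  | Some i, Some j => if i == j then s1 else None
  | None, _ => s2
  | Some _, None => s1
  end.

Section USD.
Variables (R : realFieldType) (n k : nat).
Implicit Types (c : {ffun 'I_n -> option 'I_k}).

Definition alpha c (i : 'I_k) : R := (#|[set u | c u == Some i]|)%:R / n%:R.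
Definition beta c : R := \sum_(i < k) alpha c i.
Definition gamma c : R := \sum_(i < k) alpha c i ^+ 2.
Definition psi c : R := beta c * (2 * beta c - 1) - gamma c.
Definition gtilde c : R := if beta c == 0 then 0 else gamma c / beta c ^+ 2.

Definition usd_step c (f : {ffun 'I_n -> 'I_n}) : {ffun 'I_n -> option 'I_k} :=
  [ffun u => usd_update (c u) (c (f u))].

(* E_{t-1}[ g(opn_t) ] when opn_{t-1} = c: each u picks v independently and
   uniformly, i.e. the choice function f is uniform over all n^n functions. *)
Definition usd_expect c (g : {ffun 'I_n -> option 'I_k} -> R) : R :=
  \sum_(f : {ffun 'I_n -> 'I_n}) g (usd_step c f) / (n ^ n)%:R.
End USD.

(* Main.v *)
Require Import Defs.
From HB Require Import structures.
From mathcomp Require Import all_boot all_order all_algebra.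
From mathcomp Require Import ring lra.
Import Order.TTheory GRing.Theory Num.Theory.
Local Open Scope ring_scope.
Set Implicit Arguments. Unset Strict Implicit. Unset Printing Implicit Defensive.
Section Ex.
Variables (R : realFieldType) (n : nat).
Hypothesis n_gt0 : (0 < n)%N.
Implicit Types f : {ffun 'I_n -> 'I_n}.

Definition Ex (X : {ffun 'I_n -> 'I_n} -> R) := \sum_f X f / (n ^ n)%:R.
Definition ind (a : 'I_n) (F : 'I_n -> R) (z v : 'I_n) : R := if z == a then F v else 1.

Lemma prod_ind a F f : \prod_z ind a F z (f z) = F (f a).
Proof. rewrite (bigD1 a) //= /ind eqxx big1 ?mulr1 // => z /negbTE -> //. Qed.

Lemma n_neq0 : n%:R != 0 :> R.
Proof. by rewrite pnatr_eq0 -lt0n. Qed.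

Lemma ExP (phi : 'I_n -> 'I_n -> R) :
  Ex (fun f => \prod_z phi z (f z)) = \prod_z ((\sum_v phi z v) / n%:R).
Proof.
rewrite /Ex -mulr_suml -bigA_distr_bigA.
rewrite big_split /= prodr_const card_ord natrX exprVn //.
Qed.

Lemma Ex_ext X Y : (forall f, X f = Y f) -> Ex X = Ex Y.
Proof. by move=> h; rewrite /Ex; apply: eq_bigr => f _; rewrite h. Qed.

Lemma sum1n : (\sum_(v : 'I_n) (1 : R)) / n%:R = 1.
Proof. by rewrite sumr_const card_ord divff // n_neq0. Qed.

Lemma Ex_one a (F : 'I_n -> R) : Ex (fun f => F (f a)) = (\sum_v F v) / n%:R.
Proof.
rewrite (Ex_ext (Y := fun f => \prod_z ind a F z (f z))); last by move=> f; rewrite prod_ind.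
rewrite ExP (bigD1 a) //= [X in _ * X]big1 ?mulr1; first by congr (_ / _); apply: eq_bigr => v _; rewrite /ind eqxx.
move=> z /negbTE za; rewrite /ind.
rewrite (eq_bigr (fun _ => 1)) ?sum1n // => v _; rewrite za //.
Qed.

Lemma Ex_indep a b d (F H K : 'I_n -> R) : d != a -> d != b ->
  Ex (fun f => F (f a) * H (f b) * K (f d)) =
  Ex (fun f => F (f a) * H (f b)) * ((\sum_v K v) / n%:R).
Proof.
move=> da db.
pose phi (K' : 'I_n -> R) z v := ind a F z v * ind b H z v * ind d K' z v.
have E3 K' : Ex (fun f => F (f a) * H (f b) * K' (f d)) = \prod_z ((\sum_v phi K' z v) / n%:R).
  rewrite -ExP; apply: Ex_ext => f; rewrite /phi !big_split /= !prod_ind //.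
have E31 : Ex (fun f => F (f a) * H (f b)) = \prod_z ((\sum_v phi (fun _ => 1) z v) / n%:R).
  rewrite -ExP; apply: Ex_ext => f; rewrite /phi !big_split /= !prod_ind mulr1 //.
rewrite E3 E31 (bigD1 d) //= [in RHS](bigD1 d) //=.
have -> : \sum_v phi (fun _ => 1) d v = \sum_(v : 'I_n) (1 : R).
  by apply: eq_bigr => v _; rewrite /phi /ind eqxx (negbTE da) (negbTE db) !mulr1.
rewrite sum1n mul1r mulrC; congr (_ * _).
  apply: eq_bigr => z zd; congr (_ / _); apply: eq_bigr => v _.
  by rewrite /phi /ind (negbTE zd).
by congr (_ / _); apply: eq_bigr => v _; rewrite /phi /ind eqxx (negbTE da) (negbTE db) !mul1r.
Qed.

Lemma Ex_sum (I : finType) (X : I -> {ffun 'I_n -> 'I_n} -> R) :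
  Ex (fun f => \sum_i X i f) = \sum_i Ex (X i).
Proof. by rewrite /Ex (exchange_big) /=; apply: eq_bigr => i _; rewrite mulr_suml. Qed.
Lemma Ex_sum' (I : finType) (X : I -> {ffun 'I_n -> 'I_n} -> R) :
  Ex (fun f => \sum_i X i f) = \sum_i Ex (X i).
Proof. rewrite /Ex -mulr_suml exchange_big /= mulr_suml; apply: eq_bigr => i _; rewrite mulr_suml //. Qed.

Lemma Ex_scale a X : Ex (fun f => a * X f) = a * Ex X.
Proof. by rewrite /Ex mulr_sumr; apply: eq_bigr => f _; rewrite mulrA. Qed.

Lemma Ex_sub X Y : Ex (fun f => X f - Y f) = Ex X - Ex Y.
Proof. by rewrite /Ex -sumrB; apply: eq_bigr => f _; rewrite mulrBl. Qed.

Lemma Ex_le X Y : (forall f, X f <= Y f) -> Ex X <= Ex Y.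
Proof.
move=> h; rewrite /Ex; apply: ler_sum => f _; apply: ler_wpM2r; last exact: h.
by rewrite invr_ge0 ler0n.
Qed.

Lemma Ex_ge0 X : (forall f, 0 <= X f) -> 0 <= Ex X.
Proof. move=> h; rewrite /Ex; apply: sumr_ge0 => f _; apply: mulr_ge0 => //; by rewrite invr_ge0 ler0n. Qed.

End Ex.


Lemma tangent (R : realFieldType) (G B y : R) : 0 < y -> 0 <= G -> 0 <= B -> (B = 0 -> G = 0) ->
  G * (3 / y ^+ 2 - 2 * B / y ^+ 3) <= (if B == 0 then 0 else G / B ^+ 2).
Proof.
move=> hy hG hB h0; case: (eqVneq B 0) => [B0|Bn].
  by rewrite (h0 B0) mul0r.
have Bp : 0 < B by rewrite lt_def Bn hB.
rewrite -subr_ge0.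
have -> : G / B ^+ 2 - G * (3 / y ^+ 2 - 2 * B / y ^+ 3) = G * (y - B) ^+ 2 * (y + 2 * B) / (B ^+ 2 * y ^+ 3).
  by field; rewrite (gt_eqF hy) Bn.
apply: divr_ge0; last by apply: mulr_ge0; apply: exprn_ge0; apply: ltW.
apply: mulr_ge0; [apply: mulr_ge0 => //; apply: sqr_ge0 | lra].
Qed.

Lemma cs (R : realFieldType) (k : nat) (w x : 'I_k -> R) : (forall i, 0 <= w i) ->
  (\sum_i w i * x i) ^+ 2 <= (\sum_i w i) * (\sum_i w i * x i ^+ 2).
Proof.
move=> hw.
have inner i : \sum_j w i * w j * (x i - x j) ^+ 2 =
  (w i * x i ^+ 2) * \sum_j w j - 2 * (w i * x i) * \sum_j (w j * x j) + w i * \sum_j (w j * x j ^+ 2).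
  by rewrite !mulr_sumr -sumrB -big_split; apply: eq_bigr => j _ /=; ring.
have E : \sum_i \sum_j w i * w j * (x i - x j) ^+ 2 =
   2 * ((\sum_i w i) * (\sum_i w i * x i ^+ 2)) - 2 * (\sum_i w i * x i) ^+ 2.
  rewrite (eq_bigr _ (fun i _ => inner i)) big_split /= sumrB -!mulr_suml -mulr_sumr.
  ring.
have : 0 <= \sum_i \sum_j w i * w j * (x i - x j) ^+ 2.
  apply: sumr_ge0 => i _; apply: sumr_ge0 => j _; apply: mulr_ge0; [exact: mulr_ge0 | exact: sqr_ge0].
rewrite E; lra.
Qed.

Lemma eqle (R : realFieldType) (x y : R) : x = y -> x <= y.
Proof. by move->. Qed.
Local Notation T := (10 * 10 * 10).

Lemma frac_le (R : realFieldType) (a b c d : R) : 0 < b -> 0 < d -> a * d <= c * b -> a / b <= c / d.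
Proof. move=> b0 d0 h; rewrite ler_pdivrMr // mulrAC ler_pdivlMr //. Qed.

Lemma L_b2 (R : realFieldType) (be ga : R) : 1/2 - 1/T <= be -> be * (2 * be - 1) - ga <= 1/T ->
  ga <= 1/T -> be <= 1/2 + 3/T.
Proof. move=> h1 h2 h3; rewrite leNgt; apply/negP => hlt.
have : (1/2 + 3/T) * (6/T) < be * (2 * be - 1) by apply: ltr_pM; lra.
lra. Qed.

Lemma L_b0 (R : realFieldType) (be ga : R) : 1/2 - 1/T <= be -> be <= 1/2 + 3/T -> 0 <= ga -> ga <= 1/T ->
  1/2 - 1/T <= 2 * (1 - be) * be + ga /\ 2 * (1 - be) * be + ga <= 1/2 + 1/T.
Proof. move=> h1 h2 h3 h4.
have hq : 0 <= (be - 1/2 + 3/T) * (3/T - (be - 1/2)) by apply: mulr_ge0; lra.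
have := sqr_ge0 (be - 1/2); lra. Qed.

Lemma L_M (R : realFieldType) (z ga p3 p4 : R) : 0 <= z -> z <= 1 ->
  0 <= p4 -> p4 <= p3 -> p3 <= ga -> ga <= 1/T ->
  4 * z ^+ 2 * ga + 4 * z * p3 + p4 <= 9/T.
Proof. move=> h1 h2 h3 h4 h5 h6.
have a1 : z * z <= 1 by apply: mulr_ile1; lra.
have a2 : z * z * ga <= 1 * ga by apply: ler_wpM2r; lra.
have a3 : z * p3 <= 1 * p3 by apply: ler_wpM2r; lra.
rewrite expr2; lra. Qed.

Lemma L_C (R : realFieldType) (be ga p3 b0 : R) : 1/2 - 1/T <= be -> be <= 1/2 + 3/T ->
  0 <= p3 -> p3 <= ga -> ga <= 1/T -> 1/2 - 1/T <= b0 ->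
  1/4 - 4/T <= b0 * be - 2 * (1 - be) * ga - p3.
Proof. move=> h1 h2 h3 h4 h5 h6.
have a1 : (1/2 - 1/T) * (1/2 - 1/T) <= b0 * be by apply: ler_pM; lra.
have a3 : (1 - be) * ga <= 1 * ga by apply: ler_wpM2r; lra.
lra. Qed.

Lemma L_K (R : realFieldType) (C b0 M N : R) : 1/4 - 4/T <= C -> C <= 1 -> 1/2 - 1/T <= b0 -> b0 <= 1/2 + 1/T ->
  0 <= M -> M <= 9/T -> 4 * 10 * 10 <= N ->
  1 * (N ^+ 2 * b0 ^+ 3) <= (C * N * b0 - 4 * N * M - 4 * C) * (12 * N).
Proof. move=> h1 h2 h3 h4 h5 h6 h7.
have a1 : (1/4 - 4/T) * (1/2 - 1/T) <= C * b0 by apply: ler_pM; lra.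
have a2 : b0 * b0 <= 6/10 * (6/10) by apply: ler_pM; lra.
have a3 : b0 * b0 * b0 <= 6/10 * (6/10) * (6/10) by apply: ler_pM; [apply: mulr_ge0|..]; lra.
have hK : 1/2 <= 12 * (C * b0) - 48 * M - b0 * b0 * b0 by lra.
have hNK : 4 * 10 * 10 * (1/2) <= N * (12 * (C * b0) - 48 * M - b0 * b0 * b0) by apply: ler_pM; lra.
have hpos : 0 <= N * (N * (12 * (C * b0) - 48 * M - b0 * b0 * b0) - 48 * C) by apply: mulr_ge0; lra.
rewrite -subr_ge0.
have -> : (C * N * b0 - 4 * N * M - 4 * C) * (12 * N) - 1 * (N ^+ 2 * b0 ^+ 3) =
  N * (N * (12 * (C * b0) - 48 * M - b0 * b0 * b0) - 48 * C) by ring.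
exact: hpos.
Qed.

Lemma L_cheb (R : realFieldType) (t be ga p3 p4 : R) : 0 <= t -> 0 < be -> 0 < ga ->
  ga ^+ 2 <= be * p3 -> p3 ^+ 2 <= ga * p4 ->
  ga * (t * be + ga) ^+ 2 <= (t ^+ 2 * ga + 2 * t * p3 + p4) * be ^+ 2.
Proof. move=> ht hb hg h1 h2.
have F1 : t * be * ga ^+ 2 <= t * be * (be * p3) by apply: ler_wpM2l => //; apply: mulr_ge0; lra.
have F2 : ga ^+ 3 <= be ^+ 2 * p4.
  have e1 : ga ^+ 2 * ga ^+ 2 <= (be * p3) * (be * p3) by apply: ler_pM => //; apply: sqr_ge0.
  have e2 : be ^+ 2 * p3 ^+ 2 <= be ^+ 2 * (ga * p4) by apply: ler_wpM2l => //; apply: sqr_ge0.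
  have : ga * ga ^+ 3 <= ga * (be ^+ 2 * p4).
    have -> : ga * ga ^+ 3 = ga ^+ 2 * ga ^+ 2 by ring.
    have -> : ga * (be ^+ 2 * p4) = be ^+ 2 * (ga * p4) by ring.
    apply: le_trans e2; apply: (le_trans e1).
    have -> : be * p3 * (be * p3) = be ^+ 2 * p3 ^+ 2 by ring.
    by [].
  by rewrite ler_pM2l.
have -> : (t ^+ 2 * ga + 2 * t * p3 + p4) * be ^+ 2 = ga * (t * be) ^+ 2 + 2 * (t * be * (be * p3)) + be ^+ 2 * p4 by ring.
have -> : ga * (t * be + ga) ^+ 2 = ga * (t * be) ^+ 2 + 2 * (t * be * ga ^+ 2) + ga ^+ 3 by ring.
lra. Qed.

Lemma final (R : realFieldType) (N be ga p3 p4 z EG y0 : R) :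
  z = 1 - be -> 0 < N -> 1/2 - 1/T <= be -> be * (2 * be - 1) - ga <= 1/T ->
  ga <= 1/T -> 0 <= p4 -> p4 <= p3 -> p3 <= ga -> ga ^+ 2 <= be * p3 -> p3 ^+ 2 <= ga * p4 ->
  be <= N * ga -> y0 = N * (2 * z * be + ga) ->
  N ^+ 2 * (4 * z ^+ 2 * ga + 4 * z * p3 + p4) + N * ((2 * z * be + ga) * be - 2 * z * ga - p3) <= EG ->
  ga / be ^+ 2 + 1 / (12 * N) <= 3 / y0 ^+ 2 * EG - 2 / y0 ^+ 3 * (EG * (y0 + 2)).
Proof.
move=> hz hN hb1 hpsi hg h4 h43 h3 hc1 hc2 hNg hy hEG.
have hb2 := L_b2 hb1 hpsi hg.
have hb0 : 0 < be by lra.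
have hg0 : 0 < ga.
  have : 0 < N * ga by lra.
  by rewrite pmulr_rgt0.
subst z.
have [hb0l hb0u] := L_b0 hb1 hb2 (ltW hg0) hg.
set b0 := 2 * (1 - be) * be + ga in hb0l hb0u hy hEG *.
set M := 4 * (1 - be) ^+ 2 * ga + 4 * (1 - be) * p3 + p4 in hEG *.
set C := b0 * be - 2 * (1 - be) * ga - p3 in hEG *.
have hz0 : 0 <= 1 - be by lra.
have hp3 : 0 <= p3 by lra.
have hM0 : 0 <= M.
  rewrite /M; apply: addr_ge0; [apply: addr_ge0|] => //.
    by apply: mulr_ge0; [apply: mulr_ge0 => //; apply: sqr_ge0 | lra].
  by apply: mulr_ge0 => //; apply: mulr_ge0.
have hMu : M <= 9/T by apply: L_M => //; lra.
have hCl : 1/4 - 4/T <= C by apply: L_C => //; lra.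
have hCu : C <= 1.
  have a1 : b0 * be <= 1 * 1 by apply: ler_pM; lra.
  have a2 : 0 <= (1 - be) * ga by apply: mulr_ge0; lra.
  rewrite /C; lra.
have hNl : 4 * 10 * 10 <= N.
  have : N * ga <= N * (1/T) by apply: ler_wpM2l; lra.
  lra.
have hcheb : ga * b0 ^+ 2 <= M * be ^+ 2.
  have ht : 0 <= 2 * (1 - be) by lra.
  have := L_cheb ht hb0 hg0 hc1 hc2.
  have -> : (2 * (1 - be)) ^+ 2 * ga + 2 * (2 * (1 - be)) * p3 + p4 = M by rewrite /M; ring.
  by [].
have hb0p : 0 < b0 by lra.
have hy0 : 0 < y0 by rewrite hy; apply: mulr_gt0.
have hy4 : 4 <= y0.
  have : 4 * 10 * 10 * (1/2 - 1/T) <= N * b0 by apply: ler_pM; lra.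
  rewrite hy; lra.
have -> : 3 / y0 ^+ 2 * EG - 2 / y0 ^+ 3 * (EG * (y0 + 2)) = EG * ((y0 - 4) / y0 ^+ 3).
  by field; rewrite gt_eqF.
have hLB : (N ^+ 2 * M + N * C) * ((y0 - 4) / y0 ^+ 3) <= EG * ((y0 - 4) / y0 ^+ 3).
  apply: ler_wpM2r => //; apply: divr_ge0; [lra | apply: exprn_ge0; lra].
apply: le_trans hLB.
have -> : (N ^+ 2 * M + N * C) * ((y0 - 4) / y0 ^+ 3) =
   M / b0 ^+ 2 + (C * N * b0 - 4 * N * M - 4 * C) / (N ^+ 2 * b0 ^+ 3).
  rewrite hy; field; by rewrite (gt_eqF hb0p) (gt_eqF hN).
apply: lerD.
  apply: frac_le; [exact: exprn_gt0 | exact: exprn_gt0 | exact: hcheb ].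
apply: frac_le; [ by rewrite pmulr_rgt0 // | by apply: mulr_gt0; apply: exprn_gt0 | ].
by apply: L_K => //; lra.
Qed.

Lemma sum_delta (R : realFieldType) (T : finType) (u : T) (g : T -> R) :
  \sum_x (x == u)%:R * g x = g u.
Proof.
rewrite (bigD1 u) //= eqxx mul1r big1 ?addr0 // => x /negbTE ->; by rewrite mul0r.
Qed.

Lemma card_ind (R : realFieldType) (T : finType) (P : pred T) :
  (#|[set x | P x]|)%:R = \sum_x (P x)%:R :> R.
Proof.
rewrite -sum1dep_card natr_sum big_mkcond /=; apply: eq_bigr => x _.
by case: (P x).
Qed.

Section USDP.
Variables (R : realFieldType) (n k : nat) (c : {ffun 'I_n -> option 'I_k}).
Hypothesis n_gt0 : (0 < n)%N.
Implicit Types f : {ffun 'I_n -> 'I_n}.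

Definition e (u : 'I_n) (i : 'I_k) (v : 'I_n) : R := (usd_update (c u) (c v) == Some i)%:R.
Definition Ind (i : 'I_k) (u : 'I_n) : R := (c u == Some i)%:R.
Definition Und (u : 'I_n) : R := (c u == None)%:R.
Definition A i := \sum_u Ind i u.
Definition Z := \sum_u Und u.
Definition q u i := (\sum_v e u i v) / n%:R.
Definition m i := \sum_u q u i.

Lemma eq_some (x y : 'I_k) : (Some x == Some y) = (x == y).
Proof. by apply/eqP/eqP => [[]|->]. Qed.

Lemma e_id u i v : e u i v = Ind i u * (Und v + Ind i v) + Und u * Ind i v.
Proof.
rewrite /e /Ind /Und; case: (c u) => [j|]; case: (c v) => [l|] /=; rewrite ?eq_some.
- case: (eqVneq j l) => [<-|jl]; first by rewrite eq_some; case: (j == i); rewrite /=; ring.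
  case: (eqVneq j i) => [ji|ji]; last by rewrite /=; ring.
  by rewrite ji eq_sym in jl; rewrite (negbTE jl) /=; ring.
- by case: (j == i); rewrite /=; ring.
- by rewrite /=; ring.
- by rewrite /=; ring.
Qed.

Lemma e_ge0 u i v : 0 <= e u i v. Proof. exact: ler0n. Qed.
Lemma Ind_ge0 i u : 0 <= Ind i u. Proof. exact: ler0n. Qed.
Lemma Und_ge0 u : 0 <= Und u. Proof. exact: ler0n. Qed.

Lemma Und_Ind_le u i : Und u + Ind i u <= 1.
Proof. rewrite /Und /Ind; case: (c u) => [j|] /=; rewrite ?eq_some; [case: (j == i) | ]; rewrite /=; lra. Qed.

Lemma e_le u i v : e u i v <= Und v + Ind i v.
Proof.
rewrite e_id; have h1 := Und_Ind_le u i; have h2 := Ind_ge0 i u; have h3 := Und_ge0 u.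
have h4 := Und_ge0 v; have h5 := Ind_ge0 i v; nra.
Qed.

Lemma e_mul u i j v : e u i v * e u j v = (i == j)%:R * e u i v.
Proof.
rewrite /e; case: (usd_update _ _) => [x|] /=; rewrite ?eq_some; last by rewrite !mulr0.
have [<-|ij] := eqVneq i j.
  by case: (x == i); rewrite /=; ring.
have [xi|xi] := eqVneq x i; last by rewrite /=; ring.
by rewrite xi (negbTE ij) /=; ring.
Qed.

Lemma part u : Und u + \sum_i Ind i u = 1.
Proof.
rewrite /Und /Ind; case: (c u) => [j|] /=.
  rewrite add0r; under eq_bigr do rewrite eq_some eq_sym -[(_ == _)%:R]mulr1.
  by rewrite sum_delta.
by rewrite big1 ?addr0.
Qed.

Lemma ZA : Z + \sum_i A i = n%:R.
Proof.
rewrite /Z /A exchange_big /= -big_split /= (eq_bigr (fun=> 1)) ?sumr_const ?card_ord //.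
by move=> u _; rewrite part.
Qed.

Lemma m_val i : m i = (A i * (Z + A i) + Z * A i) / n%:R.
Proof.
rewrite /m /q -mulr_suml; congr (_ / _).
under eq_bigr do under eq_bigr do rewrite e_id.
rewrite (eq_bigr (fun u => Ind i u * (Z + A i) + Und u * A i)).
  by rewrite big_split /= -!mulr_suml.
move=> u _; rewrite big_split /= -!mulr_sumr big_split //.
Qed.

Lemma q_ge0 u i : 0 <= q u i.
Proof. apply: divr_ge0; [apply: sumr_ge0 => v _; exact: e_ge0 | exact: ler0n]. Qed.

Lemma q_le u i : q u i <= (Z + A i) / n%:R.
Proof.
apply: ler_wpM2r; first by rewrite invr_ge0 ler0n.
rewrite /Z /A -big_split /=; apply: ler_sum => v _; exact: e_le.
Qed.

Definition Nf f i := \sum_u e u i (f u).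
Definition Gf f := \sum_i Nf f i ^+ 2.
Definition Bf f := \sum_i Nf f i.

Lemma Ex_pair u w i : Ex (fun f => e u i (f u) * e w i (f w)) =
  q u i * q w i + (u == w)%:R * (q u i - q u i ^+ 2).
Proof.
case: (eqVneq u w) => [<-|uw].
  rewrite (Ex_ext (Y := fun f => e u i (f u))); last by move=> f; rewrite e_mul eqxx mul1r.
  rewrite Ex_one // -/(q u i) /=; ring.
rewrite (Ex_ext (Y := fun f => e u i (f u) * (fun _ => 1) (f u) * e w i (f w))); last by move=> f; rewrite mulr1.
rewrite (Ex_indep (a:=u) (b:=u) (d:=w) n_gt0 (e u i) (fun _ => 1) (e w i)) 1?eq_sym //.
rewrite (Ex_ext (Y := fun f => e u i (f u))); last by move=> f; rewrite mulr1.
rewrite Ex_one //; rewrite /q /=; ring.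
Qed.



Definition E2 u w i := Ex (fun f => e u i (f u) * e w i (f w)).
Definition y0 := \sum_i m i.

Lemma E2_ge0 u w i : 0 <= E2 u w i.
Proof. apply: Ex_ge0 => f; apply: mulr_ge0; exact: e_ge0. Qed.

Lemma EG_expand : Ex Gf = \sum_i \sum_u \sum_w E2 u w i.
Proof.
rewrite (Ex_ext (Y := fun f => \sum_i \sum_u \sum_w e u i (f u) * e w i (f w))).
  rewrite Ex_sum; apply: eq_bigr => i _; rewrite Ex_sum; apply: eq_bigr => u _.
  by rewrite Ex_sum.
move=> f; rewrite /Gf /Nf; apply: eq_bigr => i _; rewrite expr2 mulr_suml.
by apply: eq_bigr => u _; rewrite mulr_sumr.
Qed.

Lemma EG_val : Ex Gf = \sum_i (m i ^+ 2 + m i - \sum_u q u i ^+ 2).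
Proof.
rewrite EG_expand; apply: eq_bigr => i _.
rewrite /E2; under eq_bigr do under eq_bigr do rewrite Ex_pair //.
under eq_bigr do rewrite big_split /= -mulr_sumr.
under eq_bigr do under [X in _ + X]eq_bigr do rewrite eq_sym.
under eq_bigr do rewrite sum_delta.
rewrite big_split /= /m expr2 mulr_suml sumrB addrA //.
Qed.

Lemma Ex_triple_le u w x i j :
  Ex (fun f => e u i (f u) * e w i (f w) * e x j (f x)) <=
  E2 u w i * (q x j + (i == j)%:R * ((x == u)%:R + (x == w)%:R)).
Proof.
have h0 := E2_ge0 u w i.
have hq := q_ge0 x j.
have hij : 0 <= (i == j)%:R :> R by apply: ler0n.
case: (eqVneq x u) => [->|xu].
  rewrite (Ex_ext (Y := fun f => (i == j)%:R * (e u i (f u) * e w i (f w)))); last first.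
    by move=> f; rewrite mulrAC e_mul; ring.
  rewrite Ex_scale -/(E2 u w i).
  have hb : 0 <= (u == w)%:R :> R by apply: ler0n.
  have := mulr_ge0 h0 (q_ge0 u j); have := mulr_ge0 (mulr_ge0 hij h0) hb.
  rewrite /=; lra.
case: (eqVneq x w) => [->|xw].
  rewrite (Ex_ext (Y := fun f => (i == j)%:R * (e u i (f u) * e w i (f w)))); last first.
    by move=> f; rewrite -mulrA e_mul; ring.
  rewrite Ex_scale -/(E2 u w i).
  have hb : 0 <= (w == u)%:R :> R by apply: ler0n.
  have := mulr_ge0 h0 (q_ge0 w j); have := mulr_ge0 (mulr_ge0 hij h0) hb.
  rewrite /=; lra.
rewrite (Ex_indep (a:=u) (b:=w) (d:=x) n_gt0 (e u i) (e w i) (e x j) xu xw) -/(E2 u w i) -/(q x j).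
apply: ler_wpM2l => //; rewrite lerDl; apply: mulr_ge0 => //.
by apply: addr_ge0; apply: ler0n.
Qed.

Lemma inner_sum u w i :
  \sum_j \sum_x (q x j + (i == j)%:R * ((x == u)%:R + (x == w)%:R)) = y0 + 2.
Proof.
rewrite /y0 /m; under eq_bigr do rewrite big_split /= -mulr_sumr big_split /=.
rewrite big_split /=; congr (_ + _).
have -> : \sum_(x < n) (x == u)%:R = 1 :> R.
  by rewrite (eq_bigr (fun x => (x == u)%:R * 1)) ?sum_delta // => x _; rewrite mulr1.
have -> : \sum_(x < n) (x == w)%:R = 1 :> R.
  by rewrite (eq_bigr (fun x => (x == w)%:R * 1)) ?sum_delta // => x _; rewrite mulr1.
under eq_bigr do rewrite eq_sym.
by rewrite sum_delta.
Qed.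

Lemma EGB_le : Ex (fun f => Gf f * Bf f) <= Ex Gf * (y0 + 2).
Proof.
rewrite (Ex_ext (Y := fun f => \sum_i \sum_u \sum_w \sum_j \sum_x
   e u i (f u) * e w i (f w) * e x j (f x))); last first.
  move=> f; rewrite /Gf /Bf mulr_suml; apply: eq_bigr => i _.
  rewrite /Nf expr2 -mulrA mulr_suml; apply: eq_bigr => u _.
  rewrite mulr_suml mulr_sumr; apply: eq_bigr => w _.
  rewrite !mulr_sumr; apply: eq_bigr => j _.
  rewrite !mulr_sumr; apply: eq_bigr => x _.
  by rewrite mulrA.
rewrite EG_expand mulr_suml.
rewrite Ex_sum; apply: ler_sum => i _.
rewrite mulr_suml Ex_sum; apply: ler_sum => u _.
rewrite mulr_suml Ex_sum; apply: ler_sum => w _.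
rewrite -(inner_sum u w i) mulr_sumr Ex_sum; apply: ler_sum => j _.
rewrite mulr_sumr Ex_sum; apply: ler_sum => x _.
exact: Ex_triple_le.
Qed.

Lemma alpha_c i : alpha R c i = A i / n%:R.
Proof. by rewrite /alpha card_ind. Qed.

Lemma alpha_step f i : alpha R (usd_step c f) i = Nf f i / n%:R.
Proof. by rewrite /alpha card_ind /Nf /e; congr (_ / _); apply: eq_bigr => u _; rewrite ffunE. Qed.

Lemma Nf_ge0 f i : 0 <= Nf f i.
Proof. by apply: sumr_ge0 => u _; apply: e_ge0. Qed.

Lemma Bf_ge0 f : 0 <= Bf f.
Proof. by apply: sumr_ge0 => i _; apply: Nf_ge0. Qed.

Lemma Gf_ge0 f : 0 <= Gf f.
Proof. by apply: sumr_ge0 => i _; apply: sqr_ge0. Qed.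

Lemma Bf0 f : Bf f = 0 -> Gf f = 0.
Proof.
move=> h; have h' := psumr_eq0P (fun i _ => Nf_ge0 f i) h.
by rewrite /Gf big1 // => i _; rewrite h' // expr0n.
Qed.

Lemma gtilde_step f : gtilde R (usd_step c f) = if Bf f == 0 then 0 else Gf f / Bf f ^+ 2.
Proof.
have nn := n_neq0 R n_gt0.
have hb : beta R (usd_step c f) = Bf f / n%:R.
  by rewrite /beta /Bf mulr_suml; apply: eq_bigr => i _; rewrite alpha_step.
have hg : gamma R (usd_step c f) = Gf f / n%:R ^+ 2.
  by rewrite /gamma /Gf mulr_suml; apply: eq_bigr => i _; rewrite alpha_step expr_div_n.
rewrite /gtilde hb hg; case: (eqVneq (Bf f) 0) => [->|bn].
  by rewrite mul0r eqxx.
have -> : (Bf f / n%:R == 0) = false by rewrite mulf_eq0 invr_eq0 (negbTE bn) (negbTE nn).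
by field; rewrite bn nn.
Qed.


Lemma expect_lb : 0 < y0 ->
  3 / y0 ^+ 2 * Ex Gf - 2 / y0 ^+ 3 * (Ex Gf * (y0 + 2)) <= usd_expect c (@gtilde R n k).
Proof.
move=> hy.
have -> : usd_expect c (@gtilde R n k) = Ex (fun f => gtilde R (usd_step c f)) by [].
apply: le_trans (Ex_le (X := fun f => Gf f * (3 / y0 ^+ 2 - 2 * Bf f / y0 ^+ 3)) _); last first.
  move=> f; rewrite gtilde_step; apply: tangent => //; [exact: Gf_ge0 | exact: Bf_ge0 | exact: Bf0].
rewrite [X in _ <= X](Ex_ext (Y := fun f => 3 / y0 ^+ 2 * Gf f - 2 / y0 ^+ 3 * (Gf f * Bf f))); last first.
  by move=> f; rewrite /=; ring.
rewrite Ex_sub !Ex_scale; apply: lerD => //; rewrite lerN2.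
apply: ler_wpM2l; last exact: EGB_le.
by apply: divr_ge0 => //; apply: exprn_ge0; apply: ltW.
Qed.

Definition al i := A i / n%:R.
Definition zz := Z / n%:R.

Lemma A_nat i : A i = (#|[set u | c u == Some i]|)%:R.
Proof. by rewrite card_ind. Qed.

Lemma Z_ge0 : 0 <= Z. Proof. by apply: sumr_ge0 => u _; apply: Und_ge0. Qed.
Lemma A_ge0 i : 0 <= A i. Proof. by apply: sumr_ge0 => u _; apply: Ind_ge0. Qed.

Lemma al_ge0 i : 0 <= al i.
Proof. by apply: divr_ge0; [apply: A_ge0 | apply: ler0n]. Qed.

Lemma al_le1 i : al i <= 1.
Proof.
have hn : 0 < n%:R :> R by rewrite ltr0n.
rewrite /al ler_pdivrMr // mul1r -ZA.
have : A i <= \sum_j A j.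
  rewrite (bigD1 i) //= lerDl; apply: sumr_ge0 => j _; apply: A_ge0.
have := Z_ge0; lra.
Qed.

Lemma zz_eq : zz = 1 - \sum_i al i.
Proof.
have nn := n_neq0 R n_gt0.
rewrite /zz /al -mulr_suml; apply: (mulIf nn).
rewrite mulrBl mul1r !mulfVK // -ZA; ring.
Qed.

Lemma m_al i : m i = n%:R * (al i * (2 * zz + al i)).
Proof. have nn := n_neq0 R n_gt0. by rewrite m_val /al /zz; field. Qed.

Lemma y0_eq : y0 = n%:R * (2 * zz * (\sum_i al i) + \sum_i al i ^+ 2).
Proof.
rewrite /y0 (eq_bigr _ (fun i _ => m_al i)) -mulr_sumr; congr (_ * _).
rewrite mulr_sumr -big_split /=; apply: eq_bigr => i _; ring.
Qed.

Lemma EG_lb :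
  n%:R ^+ 2 * (4 * zz ^+ 2 * (\sum_i al i ^+ 2) + 4 * zz * (\sum_i al i ^+ 3) + \sum_i al i ^+ 4) +
  n%:R * ((2 * zz * (\sum_i al i) + \sum_i al i ^+ 2) * (1 - zz) - 2 * zz * (\sum_i al i ^+ 2) - \sum_i al i ^+ 3)
  <= Ex Gf.
Proof.
rewrite EG_val.
have E1 : \sum_i (m i ^+ 2 + m i - m i * (zz + al i)) =
     (n%:R * (2 * zz * (1 - zz))) * \sum_i al i + (n%:R ^+ 2 * (4 * zz ^+ 2) + n%:R * (1 - zz) - 2 * n%:R * zz) * \sum_i al i ^+ 2
     + (n%:R ^+ 2 * (4 * zz) - n%:R) * \sum_i al i ^+ 3 + n%:R ^+ 2 * \sum_i al i ^+ 4.
  rewrite (eq_bigr (fun i => (n%:R * (2 * zz * (1 - zz))) * al i + (n%:R ^+ 2 * (4 * zz ^+ 2) + n%:R * (1 - zz) - 2 * n%:R * zz) * al i ^+ 2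
     + (n%:R ^+ 2 * (4 * zz) - n%:R) * al i ^+ 3 + n%:R ^+ 2 * al i ^+ 4)); last first.
    by move=> i _; rewrite m_al; ring.
  by rewrite !big_split /= -!mulr_sumr.
apply: le_trans (_ : _ <= \sum_i (m i ^+ 2 + m i - m i * (zz + al i))) _.
  by rewrite E1; apply: eqle; ring.
apply: ler_sum => i _; apply: lerB => //.
have -> : m i * (zz + al i) = \sum_u q u i * (zz + al i) by rewrite /m mulr_suml.
apply: ler_sum => u _; rewrite expr2; apply: ler_wpM2l; first exact: q_ge0.
by have := q_le u i; rewrite /zz /al mulrDl.
Qed.

End USDP.

Lemma nat_le_sq (R : realFieldType) (m : nat) : (m%:R : R) <= m%:R ^+ 2.
Proof. rewrite -natrX ler_nat expnS expn1; case: m => // m'; exact: leq_pmulr. Qed.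

Unset Implicit Arguments.

Theorem mainTheorem9 (R : realFieldType) :
  exists eps0 : R, 0 < eps0 /\
  forall (n k : nat) (c : {ffun 'I_n -> option 'I_k}),
    1 / 2 - eps0 <= beta R c ->
    psi R c <= eps0 ->
    gamma R c <= eps0 ->
    gtilde R c + 1 / (12 * n%:R) <= usd_expect c (@gtilde R n k).
Proof.
exists (1 / T); split; first by lra.
move=> n k c hb hpsi hg.
have n_gt0 : (0 < n)%N.
  case: n c hb hpsi hg => [|n'] c hb hpsi hg //.
  have h0 : beta R c = 0 by rewrite /beta big1 // => i _; rewrite /alpha invr0 mulr0.
  by rewrite h0 in hb; lra.
set N := n%:R : R.
have hN : 0 < N by rewrite /N ltr0n.
set a := al R c.
have hbe : beta R c = \sum_i a i by rewrite /beta; apply: eq_bigr => i _; rewrite alpha_c.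
have hga : gamma R c = \sum_i a i ^+ 2 by rewrite /gamma; apply: eq_bigr => i _; rewrite alpha_c.
have ha0 i : 0 <= a i by apply: al_ge0.
have ha1 i : a i <= 1 by apply: al_le1.
have hz := zz_eq R c n_gt0.
have h4 : 0 <= \sum_i a i ^+ 4 by apply: sumr_ge0 => i _; apply: exprn_ge0.
have h43 : \sum_i a i ^+ 4 <= \sum_i a i ^+ 3.
  by apply: ler_sum => i _; rewrite exprSr; apply: ler_piMr => //; apply: exprn_ge0.
have h3 : \sum_i a i ^+ 3 <= \sum_i a i ^+ 2.
  by apply: ler_sum => i _; rewrite exprSr; apply: ler_piMr => //; apply: exprn_ge0.
have hc1 : (\sum_i a i ^+ 2) ^+ 2 <= (\sum_i a i) * (\sum_i a i ^+ 3).
  have := @cs R k a a ha0.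
  have -> : \sum_i a i * a i = \sum_i a i ^+ 2 by apply: eq_bigr => i _; rewrite expr2.
  have -> : \sum_i a i * a i ^+ 2 = \sum_i a i ^+ 3 by apply: eq_bigr => i _; rewrite exprS.
  by [].
have hc2 : (\sum_i a i ^+ 3) ^+ 2 <= (\sum_i a i ^+ 2) * (\sum_i a i ^+ 4).
  have := @cs R k (fun i => a i ^+ 2) a (fun i => exprn_ge0 2 (ha0 i)).
  have -> : \sum_i a i ^+ 2 * a i = \sum_i a i ^+ 3 by apply: eq_bigr => i _; rewrite [RHS]exprSr.
  have -> : \sum_i a i ^+ 2 * a i ^+ 2 = \sum_i a i ^+ 4 by apply: eq_bigr => i _; rewrite -exprD.
  by [].
have hNg : \sum_i a i <= N * \sum_i a i ^+ 2.
  rewrite mulr_sumr; apply: ler_sum => i _.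
  have -> : N * a i ^+ 2 = A R c i ^+ 2 / N by rewrite /a /al -/N; field; rewrite gt_eqF.
  rewrite /a /al -/N; apply: ler_wpM2r; first by rewrite invr_ge0 ltW.
  by rewrite A_nat; apply: nat_le_sq.
have hy := y0_eq R c n_gt0.
have hEG := EG_lb R c n_gt0.
have e1 : 1 - zz R c = \sum_i a i by rewrite hz; ring.
rewrite e1 in hEG.
rewrite -/N -/a in hy hEG.
have hb1 : 1 / 2 - 1 / T <= \sum_i a i by rewrite -hbe.
have hpsi' : (\sum_i a i) * (2 * (\sum_i a i) - 1) - \sum_i a i ^+ 2 <= 1 / T.
  by move: hpsi; rewrite /psi hbe hga.
have hg' : \sum_i a i ^+ 2 <= 1 / T by rewrite -hga.
have Hf := final hz hN hb1 hpsi' hg' h4 h43 h3 hc1 hc2 hNg hy hEG.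
have hbe0 : 0 < \sum_i a i by lra.
have hga0 : 0 < \sum_i a i ^+ 2.
  have : 0 < N * \sum_i a i ^+ 2 by lra.
  by rewrite pmulr_rgt0.
have hzz0 : 0 <= zz R c by rewrite /zz; apply: divr_ge0; [apply: Z_ge0 | apply: ler0n].
have hy0 : 0 < y0 R c.
  rewrite hy; apply: mulr_gt0 => //.
  have : 0 <= 2 * zz R c * \sum_i a i by apply: mulr_ge0; [apply: mulr_ge0 => //; lra | lra].
  lra.
apply: le_trans (expect_lb n_gt0 hy0).
have -> : gtilde R c = (\sum_i a i ^+ 2) / (\sum_i a i) ^+ 2.
  by rewrite /gtilde hbe hga (gt_eqF hbe0).
exact: Hf.
Qed.
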